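(* Identify the graded dual $\mathcal{A}^{\circledast}=\bigoplus_n(\mathbb K T_n)^*$ with $\mathcal{A}$ via the pairing $\langle t,s\rangle=\delta_{t,s}$ on trees. Let $\Delta$ on $\mathcal A^{\circledast}$ be the transpose of $*$, i.e. $\langle\Delta(t),u\otimes v\rangle=\langle t,u*v\rangle$ for all trees $u,v$, and for $\ltimes\in\{\prec,\cdot,\succ\}$ and a tree $t\ne|$ let $\Delta_\ltimes(t)$ be defined by $\langle\Delta_\ltimes(t),u\otimes v\rangle=\langle t,u\ltimes v\rangle$ for all trees $u,v$ not both equal to $|$. Then for every tree $t\neq|$ with $N$ leaves, $$\Delta(t)=\sum_{m=1}^{N}{}^m t\otimes t^m,$$ and $\Delta_\prec(t)$ (resp. $\Delta_\succ(t)$, resp. $\Delta_\cdot(t)$) is the sum of the terms ${}^mt\otimes t^m$ for which the path from the root to the $m$-th leaf leaves the root vertex through its right-most child (resp. through its left-most child, resp. through a child which is neither the left-most nor the right-most).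
   Context: Trees: planar rooted trees in which every internal vertex has at least two children; the root vertex hangs from a trunk edge; leaves are edges without upper vertex; $|$ is the one-leaf tree; $T_n$ = trees with $n+1$ leaves; $\mathcal A=\bigoplus_n\mathbb K T_n$. Products on $\mathcal A$: $x_0\vee\cdots\vee x_k$ ($k\ge1$) grafts trees left to right on a new root vertex; for $x=x^{(0)}\vee\cdots\vee x^{(k)}$, $y=y^{(0)}\vee\cdots\vee y^{(l)}$: $x\prec y=x^{(0)}\vee\cdots\vee x^{(k-1)}\vee(x^{(k)}*y)$, $x\cdot y=x^{(0)}\vee\cdots\vee x^{(k-1)}\vee(x^{(k)}*y^{(0)})\vee y^{(1)}\vee\cdots\vee y^{(l)}$, $x\succ y=(x*y^{(0)})\vee y^{(1)}\vee\cdots\vee y^{(l)}$, $*=\prec+\cdot+\succ$, $|*z=z*|=z$; augmented conventions for $a\ne|$: $|\prec a=0$, $a\prec|=a$, $|\succ a=a$, $a\succ|=0$, $|\cdot a=a\cdot|=0$. Lightning splitting: number the leaves of $t$ from $1$ to $N$ left to right and let $\gamma_m$ be the path from the root to leaf $m$. ${}^mt$ is obtained by deleting, at every internal vertex of $\gamma_m$, all subtrees hanging from children strictly to the right of $\gamma_m$, then contracting every vertex left with a single child; $t^m$ is obtained likewise by deleting everything strictly to the left of $\gamma_m$. Thus ${}^mt$ has $m$ leaves and $t^m$ has $N-m+1$ leaves. *)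

(* Defs.v *)
From HB Require Import structures.
From Stdlib Require List.
From mathcomp Require Import all_boot all_order all_algebra.
Set Implicit Arguments. Unset Strict Implicit. Unset Printing Implicit Defensive.

(* A planar rooted tree: [Node [::]] is the one-leaf tree |; [Node cs] with
   [cs = [:: c0; ...; ck]] is the grafting c0 \/ ... \/ ck on a new root. *)
Inductive tree : Type := Node of seq tree.

Definition leaf : tree := Node [::].

Definition children (t : tree) : seq tree := let: Node cs := t in cs.

Fixpoint tree_ind' (P : tree -> Prop)
  (H : forall cs, (forall c, List.In c cs -> P c) -> P (Node cs)) (t : tree) : P t :=
  match t with
  | Node cs => H cs
      ((fix go (l : seq tree) : forall c, List.In c l -> P c :=
          match l with
          | [::] => fun c (h : List.In c [::]) => False_ind _ h
          | a :: l' => fun c h =>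
              match h with
              | or_introl e => eq_ind a P (tree_ind' H a) c e
              | or_intror h' => go l' c h'
              end
          end) cs)
  end.

Fixpoint tree_enc (t : tree) : GenTree.tree unit :=
  let: Node cs := t in GenTree.Node 0 (map tree_enc cs).
Fixpoint tree_dec (g : GenTree.tree unit) : tree :=
  match g with
  | GenTree.Leaf _ => Node [::]
  | GenTree.Node _ l => Node (map tree_dec l)
  end.
Lemma tree_encK : cancel tree_enc tree_dec.
Proof.
move=> t; elim/tree_ind': t => cs IH /=; congr Node.
elim: cs IH => //= a l IHl H; rewrite H; last by left.
by rewrite IHl // => c hc; apply: H; right.
Qed.
HB.instance Definition _ := Countable.copy tree (can_type tree_encK).

Fixpoint wf (t : tree) : bool :=
  let: Node cs := t in (size cs != 1%N) && all wf cs.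

Fixpoint tsize (t : tree) : nat :=
  let: Node cs := t in (sumn (map tsize cs)).+1.

Fixpoint nleaves (t : tree) : nat :=
  let: Node cs := t in if cs is [::] then 1%N else sumn (map nleaves cs).

(* A formal sum with nonnegative integer coefficients is represented by a
   sequence of trees; the coefficient of a tree is its multiplicity. *)

Definition init_ch (cs : seq tree) := take (size cs).-1 cs.
Definition last_ch (cs : seq tree) := last leaf cs.
Definition first_ch (cs : seq tree) := head leaf cs.

Section Products.
Variable rec : tree -> tree -> seq tree.

Definition prec_with (x y : tree) : seq tree :=
  let xs := children x in let ys := children y in
  if xs is [::] then [::]
  else if ys is [::] then [:: x]
  else [seq Node (rcons (init_ch xs) z) | z <- rec (last_ch xs) y].

Definition dot_with (x y : tree) : seq tree :=
  let xs := children x in let ys := children y in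
  if xs is [::] then [::]
  else if ys is [::] then [::]
  else [seq Node (init_ch xs ++ z :: behead ys) | z <- rec (last_ch xs) (first_ch ys)].

Definition succ_with (x y : tree) : seq tree :=
  let xs := children x in let ys := children y in
  if ys is [::] then [::]
  else if xs is [::] then [:: y]
  else [seq Node (z :: behead ys) | z <- rec x (first_ch ys)].

Definition star_with (x y : tree) : seq tree :=
  if children x is [::] then [:: y]
  else if children y is [::] then [:: x]
  else prec_with x y ++ dot_with x y ++ succ_with x y.
End Products.

Fixpoint star_fuel (n : nat) : tree -> tree -> seq tree :=
  match n with
  | 0 => fun _ _ => [::]
  | n'.+1 => star_with (star_fuel n')
  end.

(* The fuel tsize x + tsize y suffices: every recursive call strictly
   decreases the total number of vertices. *)
Definition star (x y : tree) : seq tree := star_fuel (tsize x + tsize y) x y.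
Definition prec (x y : tree) : seq tree := prec_with star x y.
Definition dotp (x y : tree) : seq tree := dot_with star x y.
Definition succ (x y : tree) : seq tree := succ_with star x y.

(* Leaves are numbered 1..N from left to right.  [root_child t m] is the
   (0-based) index of the child of the root through which the path from the
   root to leaf m leaves the root vertex. *)
Definition root_child (t : tree) (m : nat) : nat :=
  (fix go (cs : seq tree) (m : nat) (j : nat) : nat :=
     match cs with
     | [::] => j
     | c :: cs' => if m <= nleaves c then j else go cs' (m - nleaves c) j.+1
     end) (children t) m 0.

(* ^m t : delete everything strictly right of the path, contract unary vertices *)
Fixpoint lsplit (t : tree) (m : nat) : tree :=
  let: Node cs := t in
  if cs is [::] then t else
  (fix go (acc : seq tree) (cs : seq tree) (m : nat) : tree :=
     match cs with
     | [::] => leaf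
     | c :: cs' =>
         if m <= nleaves c then
           (if acc is [::] then lsplit c m else Node (rcons acc (lsplit c m)))
         else go (rcons acc c) cs' (m - nleaves c)
     end) [::] cs m.

(* t^m : delete everything strictly left of the path, contract unary vertices *)
Fixpoint rsplit (t : tree) (m : nat) : tree :=
  let: Node cs := t in
  if cs is [::] then t else
  (fix go (cs : seq tree) (m : nat) : tree :=
     match cs with
     | [::] => leaf
     | c :: cs' =>
         if m <= nleaves c then
           (if cs' is [::] then rsplit c m else Node (rsplit c m :: cs'))
         else go cs' (m - nleaves c)
     end) cs m.

(* Main.v *)
Require Import Defs.
From HB Require Import structures.
From mathcomp Require Import all_boot all_order all_algebra.
From mathcomp Require Import zify.
From Stdlib Require Import FunctionalExtensionality.
Set Implicit Arguments. Unset Strict Implicit. Unset Printing Implicit Defensive.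
Notation funext := functional_extensionality.

Lemma tsize_mem c cs : c \in cs -> Defs.tsize c <= sumn (map Defs.tsize cs).
Proof.
elim: cs => //= a l IH; rewrite inE => /orP [/eqP -> | /IH]; lia.
Qed.

Lemma tsize_pos x : 0 < Defs.tsize x. Proof. by case: x. Qed.

Lemma tsize_last xs : xs != [::] -> Defs.tsize (last_ch xs) < Defs.tsize (Node xs).
Proof.
case/lastP: xs => // s x _; rewrite /last_ch last_rcons /=.
have := @tsize_mem x (rcons s x); rewrite mem_rcons mem_head => /(_ isT) h /=.
by rewrite ltnS.
Qed.

Lemma tsize_first xs : xs != [::] -> Defs.tsize (first_ch xs) < Defs.tsize (Node xs).
Proof. case: xs => // a l _ /=; lia. Qed.

Lemma star_with_ext r1 r2 x y :
  (forall a b, Defs.tsize a + Defs.tsize b < Defs.tsize x + Defs.tsize y -> r1 a b = r2 a b) ->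
  star_with r1 x y = star_with r2 x y.
Proof.
case: x => xs; case: y => ys H.
rewrite /star_with /prec_with /dot_with /succ_with /=.
case: xs H => [|a l] H //; case: ys H => [|b l'] H //.
have h1 := @tsize_last (a :: l) isT.
have h2 := @tsize_first (b :: l') isT.
rewrite H; last by lia.
rewrite (H (last_ch (a :: l))); last by lia.
rewrite (H (Node (a :: l))) //; lia.
Qed.

Lemma star_fuel_stable n : forall m x y, Defs.tsize x + Defs.tsize y <= n ->
  Defs.tsize x + Defs.tsize y <= m -> star_fuel n x y = star_fuel m x y.
Proof.
elim: n => [|n IH] [|m] x y h1 h2.
- have := tsize_pos x; lia.
- have := tsize_pos x; lia.
- have := tsize_pos x; lia.
rewrite /=; apply: star_with_ext => a b H; apply: IH; lia.
Qed.

Lemma star_unfold x y : star x y = star_with star x y.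
Proof.
rewrite /star; have hx := tsize_pos x; have hy := tsize_pos y.
case E: (Defs.tsize x + Defs.tsize y) => [|S]; first lia.
rewrite /=; apply: star_with_ext => a b H; apply: star_fuel_stable; lia.
Qed.

Fixpoint LG (acc cs : seq tree) (m : nat) : tree :=
  match cs with
  | [::] => leaf
  | c :: cs' =>
      if m <= nleaves c then
        (if acc is [::] then lsplit c m else Node (rcons acc (lsplit c m)))
      else LG (rcons acc c) cs' (m - nleaves c)
  end.

Fixpoint RG (cs : seq tree) (m : nat) : tree :=
  match cs with
  | [::] => leaf
  | c :: cs' =>
      if m <= nleaves c then
        (if cs' is [::] then rsplit c m else Node (rsplit c m :: cs'))
      else RG cs' (m - nleaves c)
  end.

Fixpoint RC (cs : seq tree) (m : nat) (j : nat) : nat :=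
  match cs with
  | [::] => j
  | c :: cs' => if m <= nleaves c then j else RC cs' (m - nleaves c) j.+1
  end.

Lemma lsplitE cs m : cs != [::] -> lsplit (Node cs) m = LG [::] cs m.
Proof. by case: cs. Qed.
Lemma rsplitE cs m : cs != [::] -> rsplit (Node cs) m = RG cs m.
Proof. by case: cs. Qed.
Lemma root_childE cs m : root_child (Node cs) m = RC cs m 0.
Proof. by []. Qed.

Definition off (cs : seq tree) j := sumn (map nleaves (take j cs)).

Lemma LG_spec cs : forall acc j m', j < size cs -> 0 < m' <= nleaves (nth leaf cs j) ->
  LG acc cs (off cs j + m') =
  if acc ++ take j cs is [::] then lsplit (nth leaf cs j) m'
  else Node (rcons (acc ++ take j cs) (lsplit (nth leaf cs j) m')).
Proof.
elim: cs => [|c cs IH] acc [|j] m' //= hj /andP [h1 h2].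
- by rewrite /off /= add0n h2 cats0.
- rewrite /off /= -/(off cs j) ifF; last by lia.
  have -> : nleaves c + off cs j + m' - nleaves c = off cs j + m' by lia.
  by rewrite IH ?h1 ?h2 // cat_rcons.
Qed.

Lemma RG_spec cs : forall j m', j < size cs -> 0 < m' <= nleaves (nth leaf cs j) ->
  RG cs (off cs j + m') =
  if drop j.+1 cs is [::] then rsplit (nth leaf cs j) m'
  else Node (rsplit (nth leaf cs j) m' :: drop j.+1 cs).
Proof.
elim: cs => [|c cs IH] [|j] m' //= hj /andP [h1 h2].
- by rewrite /off /= add0n h2 drop0.
- rewrite /off /= -/(off cs j) ifF; last by lia.
  have -> : nleaves c + off cs j + m' - nleaves c = off cs j + m' by lia.
  by rewrite IH ?h1 ?h2.
Qed.

Lemma RC_spec cs : forall j0 j m', j < size cs -> 0 < m' <= nleaves (nth leaf cs j) ->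
  RC cs (off cs j + m') j0 = j0 + j.
Proof.
elim: cs => [|c cs IH] j0 [|j] m' //= hj /andP [h1 h2].
- by rewrite /off /= add0n h2 addn0.
- rewrite /off /= -/(off cs j) ifF; last by lia.
  have -> : nleaves c + off cs j + m' - nleaves c = off cs j + m' by lia.
  rewrite IH ?h1 ?h2 //; lia.
Qed.

Lemma count_iota_sum (P : pred nat) cs : forall a,
  count P (iota a (sumn (map nleaves cs))) =
  \sum_(j < size cs) count P (iota (a + off cs j) (nleaves (nth leaf cs j))).
Proof.
elim: cs => [|c cs IH] a /=; first by rewrite big_ord0.
rewrite iotaD count_cat big_ord_recl /= /off /= addn0; congr (_ + _).
rewrite IH; apply: eq_bigr => j _; by rewrite addnA.
Qed.

Definition LS (cs : seq tree) (j : nat) (l : tree) :=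
  if j == 0 then l else Node (rcons (take j cs) l).
Definition RS (cs : seq tree) (j : nat) (r : tree) :=
  if j == (size cs).-1 then r else Node (r :: drop j.+1 cs).

Arguments lsplit : simpl never.
Arguments rsplit : simpl never.
Arguments root_child : simpl never.

Lemma count_split cs (F : tree -> tree -> nat -> bool) : cs != [::] ->
  count (fun m => F (lsplit (Node cs) m) (rsplit (Node cs) m) (root_child (Node cs) m))
    (iota 1 (nleaves (Node cs))) =
  \sum_(j < size cs) count (fun m' => F (LS cs j (lsplit (nth leaf cs j) m'))
                                      (RS cs j (rsplit (nth leaf cs j) m')) j)
                     (iota 1 (nleaves (nth leaf cs j))).
Proof.
move=> cs0.
have -> : nleaves (Node cs) = sumn (map nleaves cs) by case: cs cs0.
rewrite count_iota_sum; apply: eq_bigr => [[j hj]] _.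
rewrite addnC iotaDl count_map; apply: eq_in_count => m'.
rewrite mem_iota => hm.
have hm' : 0 < m' <= nleaves (nth leaf cs j) by rewrite add1n ltnS in hm.
rewrite /preim /=.
rewrite lsplitE // rsplitE // root_childE LG_spec // RG_spec // RC_spec //.
congr F.
- rewrite /LS /=; clear hm hm'.
  by case: j hj => [|j] hj; case: cs cs0 hj => // c cs' _ hj.
- rewrite /RS /=; clear hm hm'; case: (j =P (size cs).-1) => [ej | nj].
  + rewrite drop_oversize //; move: hj; rewrite ej; case: (size cs) => //.
  + case E: (drop j.+1 cs) => //.
    have := size_drop j.+1 cs; rewrite E /= => e; case: nj.
    move: hj e; case: (size cs) => // n; rewrite ltnS subSS /=; lia.
Qed.

Arguments lsplit : simpl never.
Arguments rsplit : simpl never.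
Arguments root_child : simpl never.
Arguments star : simpl never.
Arguments init_ch : simpl never.
Arguments last_ch : simpl never.
Arguments first_ch : simpl never.
Arguments LS : simpl never.
Arguments RS : simpl never.

Lemma count0 T (P : pred T) s : (forall x, P x = false) -> count P s = 0.
Proof. by move=> H; elim: s => //= x s ->; rewrite H. Qed.

Lemma countb T (b : bool) (P : pred T) s :
  count (fun x => b && P x) s = if b then count P s else 0.
Proof. by case: b => //; apply: count0. Qed.

Lemma Node_inj : injective Node. Proof. by move=> a b [->]. Qed.
Lemma Node_eq a b : (Node a == Node b) = (a == b).
Proof. by apply/eqP/eqP => [[->]|->]. Qed.

Lemma init_last (s : seq tree) : s != [::] -> s = rcons (init_ch s) (last_ch s).
Proof.
case/lastP: s => // s x _.
by rewrite /init_ch /last_ch size_rcons /= last_rcons -cats1 take_size_cat // cats1.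
Qed.
Lemma first_behead (s : seq tree) : s != [::] -> s = first_ch s :: behead s.
Proof. by case: s. Qed.

Lemma In_mem (c : tree) cs : List.In c cs -> c \in cs.
Proof. elim: cs => //= a l IH [-> | /IH h]; rewrite inE; first by rewrite eqxx. by rewrite h orbT. Qed.

Lemma rcons_leaf s x : (Node (rcons s x) == leaf) = false.
Proof. by rewrite /leaf Node_eq; case: s. Qed.
Lemma cons_leaf s x : (Node (x :: s) == leaf) = false.
Proof. by rewrite /leaf Node_eq. Qed.

Lemma lsplit_leaf m : lsplit leaf m = leaf. Proof. by []. Qed.
Lemma rsplit_leaf m : rsplit leaf m = leaf. Proof. by []. Qed.

Lemma LS0 cs : LS cs 0 = id. Proof. by []. Qed.
Lemma LS_pos cs j : 0 < j -> LS cs j = fun l => Node (rcons (take j cs) l).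
Proof. by rewrite /LS; case: j. Qed.
Lemma RSk cs j : j = (size cs).-1 -> RS cs j = id.
Proof. by rewrite /RS => ->; apply: funext => r; rewrite eqxx. Qed.
Lemma RS_nk cs j : j != (size cs).-1 -> RS cs j = fun r => Node (r :: drop j.+1 cs).
Proof. by rewrite /RS => /negbTE h; apply: funext => r; rewrite h. Qed.

Lemma Lleaf t : wf t -> forall Q : pred tree,
  count (fun m => (lsplit t m == leaf) && Q (rsplit t m)) (iota 1 (nleaves t)) = Q t.
Proof.
elim/tree_ind': t => cs IH /andP [hs hall] Q.
case: cs IH hs hall => [|c cs'] IH hs hall.
  by rewrite /= addn0.
rewrite (count_split (fun l r (_ : nat) => (l == leaf) && Q r)) //.
rewrite big_ord_recl /= big1 ?addn0.
  rewrite /LS /= RS_nk /=; last by case: cs' hs {IH hall}.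
  have hc : wf c by case/andP: hall.
  rewrite drop0; exact: (IH c (or_introl erefl) hc (fun r => Q (Node (r :: cs')))).
move=> j _; apply: count0 => m'.
by rewrite LS_pos //= cons_leaf.
Qed.

Lemma mem_In (c : tree) cs : c \in cs -> List.In c cs.
Proof.
elim: cs => //= a l IH; rewrite inE => /orP [/eqP -> | /IH h]; [left | right] => //.
Qed.

Lemma wf_child cs c : wf (Node cs) -> c \in cs -> wf c.
Proof. by case/andP => _ /allP; apply. Qed.

Lemma Rleaf t : wf t -> forall Q : pred tree,
  count (fun m => Q (lsplit t m) && (rsplit t m == leaf)) (iota 1 (nleaves t)) = Q t.
Proof.
elim/tree_ind': t => cs IH wft Q.
case: cs IH wft => [|c cs'] IH wft.
  by rewrite /= addn0 andbT.
have hs : cs' != [::] by case: cs' wft {IH}.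
rewrite (count_split (fun l r (_ : nat) => Q l && (r == leaf))) //.
rewrite big_ord_recr /= big1 ?add0n.
  set cs := c :: cs'.
  have hk : 0 < size cs' by case: cs' hs {IH wft cs}.
  have hn : size cs' < size cs by [].
  rewrite LS_pos // RSk //.
  have hm : nth leaf cs (size cs') \in cs by apply: mem_nth.
  have := IH _ (mem_In hm) (wf_child wft hm) (fun l => Q (Node (rcons (take (size cs') cs) l))).
  move=> /= ->.
  by rewrite -take_nth // -[(size cs').+1]/(size cs) take_size.
move=> j _; apply: count0 => m'.
rewrite RS_nk /=; first by rewrite cons_leaf andbF.
have := ltn_ord j; rewrite neq_ltn /=; move=> ->; by [].
Qed.

Arguments lsplit : simpl never.
Arguments rsplit : simpl never.
Arguments root_child : simpl never.
Arguments star : simpl never.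
Arguments init_ch : simpl never.
Arguments last_ch : simpl never.
Arguments first_ch : simpl never.
Arguments LS : simpl never.
Arguments RS : simpl never.

Lemma star_leafl v : star leaf v = [:: v].
Proof. by rewrite star_unfold. Qed.
Lemma star_leafr u : star u leaf = [:: u].
Proof. by rewrite star_unfold; case: u => [[|a l]]. Qed.
Lemma star_node us vs : us != [::] -> vs != [::] ->
  star (Node us) (Node vs) = prec (Node us) (Node vs) ++ dotp (Node us) (Node vs) ++ succ (Node us) (Node vs).
Proof. by rewrite star_unfold; case: us => // a l; case: vs. Qed.
Lemma precE us vs : us != [::] -> vs != [::] ->
  prec (Node us) (Node vs) = [seq Node (rcons (init_ch us) z) | z <- star (last_ch us) (Node vs)].
Proof. by case: us => // a l; case: vs. Qed.
Lemma dotE us vs : us != [::] -> vs != [::] ->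
  dotp (Node us) (Node vs) = [seq Node (init_ch us ++ z :: behead vs) | z <- star (last_ch us) (first_ch vs)].
Proof. by case: us => // a l; case: vs. Qed.
Lemma succE us vs : us != [::] -> vs != [::] ->
  succ (Node us) (Node vs) = [seq Node (z :: behead vs) | z <- star (Node us) (first_ch vs)].
Proof. by case: us => // a l; case: vs. Qed.
Lemma prec_leafl v : prec leaf v = [::]. Proof. by []. Qed.
Lemma prec_leafr us : us != [::] -> prec (Node us) leaf = [:: Node us].
Proof. by case: us. Qed.
Lemma succ_leafl vs : vs != [::] -> succ leaf (Node vs) = [:: Node vs].
Proof. by case: vs. Qed.
Lemma succ_leafr u : succ u leaf = [::]. Proof. by []. Qed.
Lemma dot_leafl v : dotp leaf v = [::]. Proof. by []. Qed.
Lemma dot_leafr u : dotp u leaf = [::]. Proof. by case: u => [[|a l]]. Qed.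

Definition Pstar t := forall u v, wf u -> wf v ->
  count_mem t (star u v) =
  count (fun m => (lsplit t m == u) && (rsplit t m == v)) (iota 1 (nleaves t)).

Lemma last_mem (s : seq tree) : s != [::] -> last_ch s \in s.
Proof. by case: s => // a l _; rewrite /last_ch /=; apply: mem_last. Qed.
Lemma first_mem (s : seq tree) : s != [::] -> first_ch s \in s.
Proof. by case: s => // a l _; rewrite /first_ch /= mem_head. Qed.

Lemma ord_neq n (j : 'I_n) k (hk : k < n) : j != Ordinal hk -> (j == k :> nat) = false.
Proof. by move=> h; apply/negbTE; apply: contra h => /eqP e; apply/eqP/val_inj. Qed.

Lemma prec_count cs us vs : 1 < size cs -> us != [::] -> vs != [::] ->
  all wf us -> wf (Node vs) -> (forall c, c \in cs -> Pstar c) ->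
  count_mem (Node cs) (prec (Node us) (Node vs)) =
  count (fun m => [&& lsplit (Node cs) m == Node us, rsplit (Node cs) m == Node vs
                    & root_child (Node cs) m == (size cs).-1]) (iota 1 (nleaves (Node cs))).
Proof.
move=> hs hus hvs wus wv IH.
have hcs : cs != [::] by apply/eqP => E; rewrite E in hs.
rewrite precE // count_map.
have e : forall z, preim (fun z => Node (rcons (init_ch us) z)) (pred1 (Node cs)) z
   = (init_ch us == init_ch cs) && (z == last_ch cs).
  by move=> z /=; rewrite Node_eq {1}(init_last hcs) eqseq_rcons.
rewrite (eq_count e) countb.
rewrite (count_split (fun l r j => [&& l == Node us, r == Node vs & j == (size cs).-1])) //.
have hk : (size cs).-1 < size cs by case: (size cs) hs.
rewrite (bigD1 (Ordinal hk)) //= big1 ?addn0; last first.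
  by move=> j hj; apply: count0 => m'; rewrite (ord_neq hj) !andbF.
rewrite LS_pos; last by case: (size cs) hs => // [[|n]].
rewrite RSk // eqxx nth_last.
rewrite (@eq_count _ _ (fun m' => (take (size cs).-1 cs == init_ch us) &&
   ((lsplit (last leaf cs) m' == last_ch us) && (rsplit (last leaf cs) m' == Node vs)))); last first.
  by move=> m' /=; rewrite andbT Node_eq {1}(init_last hus) eqseq_rcons -andbA.
rewrite countb.
rewrite -/(init_ch cs) eq_sym.
case: (init_ch cs == init_ch us) => //.
apply: (IH (last_ch cs)); first exact: last_mem.
  by apply: (allP wus); apply: last_mem.
exact: wv.
Qed.

Lemma succ_count cs us vs : 1 < size cs -> us != [::] -> vs != [::] ->
  wf (Node us) -> all wf vs -> (forall c, c \in cs -> Pstar c) ->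
  count_mem (Node cs) (succ (Node us) (Node vs)) =
  count (fun m => [&& lsplit (Node cs) m == Node us, rsplit (Node cs) m == Node vs
                    & root_child (Node cs) m == 0]) (iota 1 (nleaves (Node cs))).
Proof.
move=> hs hus hvs wu wvs IH.
have hcs : cs != [::] by apply/eqP => E; rewrite E in hs.
rewrite succE // count_map.
have e : forall z, preim (fun z => Node (z :: behead vs)) (pred1 (Node cs)) z
   = (behead cs == behead vs) && (z == first_ch cs).
  by move=> z /=; rewrite Node_eq {1}(first_behead hcs) eqseq_cons andbC eq_sym.
rewrite (eq_count e) countb.
rewrite (count_split (fun l r j => [&& l == Node us, r == Node vs & j == 0])) //.
have h0 : 0 < size cs by case: (size cs) hs.
rewrite (bigD1 (Ordinal h0)) //= big1 ?addn0; last first.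
  by move=> j hj; apply: count0 => m'; rewrite (ord_neq hj) !andbF.
rewrite LS0 RS_nk; last by case: (size cs) hs => // [[|n]].
rewrite drop1 nth0 -/(first_ch cs).
rewrite (@eq_count _ _ (fun m' => (behead cs == behead vs) &&
   ((lsplit (first_ch cs) m' == Node us) && (rsplit (first_ch cs) m' == first_ch vs)))); last first.
  move=> m' /=; rewrite andbT Node_eq {1}(first_behead hvs) eqseq_cons.
  by case: (behead cs == behead vs); rewrite ?andbT ?andbF.
rewrite countb.
case: (behead cs == behead vs) => //.
apply: (IH (first_ch cs)); first exact: first_mem.
  exact: wu.
by apply: (allP wvs); apply: first_mem.
Qed.

Lemma size_init (s : seq tree) : size (init_ch s) = (size s).-1.
Proof. by rewrite /init_ch size_take; case: s => //= a l; rewrite ltnSn. Qed.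

Lemma eq_size_false (s t : seq tree) : size s != size t -> (s == t) = false.
Proof. by move=> h; apply/negbTE; apply: contra h => /eqP ->. Qed.

Lemma LS_eq cs j l us : 0 < j -> us != [::] ->
  (LS cs j l == Node us) = (take j cs == init_ch us) && (l == last_ch us).
Proof. by move=> hj hus; rewrite LS_pos //= Node_eq {1}(init_last hus) eqseq_rcons. Qed.

Lemma RS_eq cs j r vs : j != (size cs).-1 -> vs != [::] ->
  (RS cs j r == Node vs) = (r == first_ch vs) && (drop j.+1 cs == behead vs).
Proof. by move=> hj hvs; rewrite RS_nk //= Node_eq {1}(first_behead hvs) eqseq_cons. Qed.

Lemma dot_count cs us vs : 1 < size cs -> 1 < size us -> 1 < size vs ->
  all wf us -> all wf vs -> (forall c, c \in cs -> Pstar c) ->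
  count_mem (Node cs) (dotp (Node us) (Node vs)) =
  count (fun m => [&& lsplit (Node cs) m == Node us, rsplit (Node cs) m == Node vs
                    & 0 < root_child (Node cs) m < (size cs).-1]) (iota 1 (nleaves (Node cs))).
Proof.
move=> hs hus hvs wus wvs IH.
have hcs : cs != [::] by apply/eqP => E; rewrite E in hs.
have hus0 : us != [::] by apply/eqP => E; rewrite E in hus.
have hvs0 : vs != [::] by apply/eqP => E; rewrite E in hvs.
have hbv : behead vs != [::] by case: vs hvs {hvs0 wvs} => // a [|b l].
set i := (size us).-1.
set k := (size cs).-1.
have hi0 : 0 < i by rewrite /i; case: (size us) hus => // [[|n]].
set b := [&& i < k, take i cs == init_ch us & drop i.+1 cs == behead vs].
rewrite dotE // count_map.
have e : forall z, preim (fun z => Node (init_ch us ++ z :: behead vs)) (pred1 (Node cs)) z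
   = b && (z == nth leaf cs i).
  move=> z /=; rewrite Node_eq.
  case: (ltnP i (size cs)) => hi.
    have E : cs = take i cs ++ nth leaf cs i :: drop i.+1 cs by rewrite -drop_nth // cat_take_drop.
    rewrite {1}E eqseq_cat; last by rewrite size_init size_takel // ltnW.
    rewrite eqseq_cons /b.
    case: (ltnP i k) => hik /=.
      by rewrite eq_sym [drop _ _ == _]eq_sym; case: (_ == _); case: (_ == _); case: (_ == _).
    rewrite drop_oversize; last by rewrite /k in hik; case: (size cs) hik hi => // n; rewrite /=; lia.
    by rewrite eq_sym (negbTE hbv) !andbF.
  rewrite eq_size_false; last first.
    rewrite size_cat size_init /= -/i; apply/eqP => E; move: hi; rewrite -E; lia.
  by rewrite /b ltnNge (leq_trans (leq_pred _) hi).
rewrite (eq_count e) countb.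
rewrite (count_split (fun l r j => [&& l == Node us, r == Node vs & 0 < j < k])) //.
case hb : b.
  move/and3P: hb => [hik ht hd].
  have hi : i < size cs by rewrite /k in hik; case: (size cs) hik => //= n; lia.
  rewrite (bigD1 (Ordinal hi)) //= big1 ?addn0; last first.
    move=> j hj; apply: count0 => m'.
    case hjk: (0 < j < k); last by rewrite !andbF.
    move/andP: hjk => [hj0 hjk].
    rewrite LS_eq // eq_size_false ?andbF //.
    rewrite size_init size_takel; last by apply: ltnW.
    by move: hj; apply: contra => /eqP e'; apply/eqP/val_inj.
  rewrite (@eq_count _ _ (fun m' => (lsplit (nth leaf cs i) m' == last_ch us) &&
     (rsplit (nth leaf cs i) m' == first_ch vs))); last first.
    move=> m' /=; rewrite LS_eq // RS_eq //; last by rewrite -/k neq_ltn hik.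
    by rewrite ht hd hi0 hik /= !andbT.
  apply: (IH (nth leaf cs i)); first exact: mem_nth.
    by apply: (allP wus); apply: last_mem.
  by apply: (allP wvs); apply: first_mem.
rewrite big1 // => j _; apply: count0 => m'.
case hjk: (0 < j < k); last by rewrite !andbF.
move/andP: hjk => [hj0 hjk].
rewrite LS_eq // RS_eq //; last by rewrite -/k neq_ltn hjk.
case: (eqVneq (j : nat) i) => [ej | nj].
  move: hb; rewrite /b -ej hjk /= => /negbT; rewrite negb_and => /orP [] /negbTE ->.
    by [].
  by rewrite !andbF.
rewrite eq_size_false //.
by rewrite size_init size_takel // ltnW.
Qed.

Arguments lsplit : simpl never.
Arguments rsplit : simpl never.
Arguments root_child : simpl never.
Arguments star : simpl never.
Arguments init_ch : simpl never.
Arguments last_ch : simpl never.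
Arguments first_ch : simpl never.
Arguments LS : simpl never.
Arguments RS : simpl never.

Lemma count_and3 T (P Q : pred T) (c : bool) s :
  count (fun x => [&& P x, Q x & c]) s = c * count (fun x => P x && Q x) s.
Proof. by case: c; rewrite ?mul1n ?mul0n; [apply: eq_count => x; rewrite andbT | apply: count0 => x; rewrite !andbF]. Qed.

Lemma wf_size cs : wf (Node cs) -> cs != [::] -> 1 < size cs.
Proof. by case/andP; case: cs => // a [|b l]. Qed.

Lemma cat_cons_leaf (s t : seq tree) z : (Node (s ++ z :: t) == leaf) = false.
Proof. by rewrite /leaf Node_eq; case: s. Qed.

Lemma all_Pstar t : wf t -> Pstar t.
Proof.
elim/tree_ind': t => cs IH wft [us] [vs] wu wv.
case: us wu => [|a l] wu.
  rewrite star_leafl /= addn0 eq_sym; symmetry; exact: (Lleaf wft (fun r => r == Node vs)).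
case: vs wv => [|b l'] wv.
  rewrite star_leafr /= addn0 eq_sym; symmetry; exact: (Rleaf wft (fun r => r == Node (a :: l))).
rewrite star_node //.
case: cs IH wft => [|c cs'] IH wft.
  rewrite /= precE // dotE // succE // !count_cat !count_map.
  do 3 (rewrite count0; last by move=> z /=; rewrite Node_eq; case: (init_ch (a :: l))).
  change (lsplit (Node [::]) 1) with (Node [::]).
  by rewrite Node_eq.
set cs := c :: cs'.
have hs : 1 < size cs by apply: wf_size.
have IH' : forall c0, c0 \in cs -> Pstar c0.
  move=> c0 hc0; apply: (IH c0 (mem_In hc0)); exact: wf_child wft hc0.
have wus : all wf (a :: l) by case/andP: wu.
have wvs : all wf (b :: l') by case/andP: wv.
rewrite !count_cat prec_count // dot_count //; last 2 first.
- exact: wf_size.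
- exact: wf_size.
rewrite succ_count //.
set k := (size cs).-1.
rewrite (count_split (fun l0 r j => [&& l0 == Node (a :: l), r == Node (b :: l') & j == k])) //.
rewrite (count_split (fun l0 r j => [&& l0 == Node (a :: l), r == Node (b :: l') & 0 < j < k])) //.
rewrite (count_split (fun l0 r j => [&& l0 == Node (a :: l), r == Node (b :: l') & j == 0])) //.
rewrite (count_split (fun l0 r (j : nat) => (l0 == Node (a :: l)) && (r == Node (b :: l')))) //.
rewrite -!big_split; apply: eq_bigr => j _ /=.
rewrite !count_and3 -!mulnDl.
suff -> : ((j : nat) == k) + ((0 < j < k) + ((j : nat) == 0%N)) = 1 by rewrite mul1n.
have := ltn_ord j; rewrite /k; move: (nat_of_ord j) => jj.
move: hs; move: (size cs) => n hn hj.
case: jj hj => [|jj] hj.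
  by case: n hn hj => [|[|n]].
case: (ltngtP jj.+1 n.-1) => h; rewrite /=.
- by [].
- move: h hj; case: n {hn} => //= n; lia.
- by [].
Qed.

Arguments lsplit : simpl never.
Arguments rsplit : simpl never.
Arguments root_child : simpl never.
Arguments star : simpl never.
Arguments init_ch : simpl never.
Arguments last_ch : simpl never.
Arguments first_ch : simpl never.
Arguments LS : simpl never.
Arguments RS : simpl never.

Lemma prec_full cs u v : wf (Node cs) -> cs != [::] -> wf u -> wf v ->
  ~~ ((u == leaf) && (v == leaf)) ->
  count_mem (Node cs) (prec u v) =
  count (fun m => [&& lsplit (Node cs) m == u, rsplit (Node cs) m == v
                    & root_child (Node cs) m == (size cs).-1]) (iota 1 (nleaves (Node cs))).
Proof.
move=> wft hcs wu wv nb.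
have hs : 1 < size cs by apply: wf_size.
have IH' : forall c0, c0 \in cs -> Pstar c0.
  by move=> c0 hc0; apply: all_Pstar; exact: wf_child wft hc0.
have hk : (size cs).-1 < size cs by case: (size cs) hs.
have hk0 : 0 < (size cs).-1 by case: (size cs) hs => // [[|n]].
case: u wu nb => [[|a l]] wu nb.
  rewrite prec_leafl /=.
  rewrite (count_split (fun l0 r j => [&& l0 == leaf, r == v & j == (size cs).-1])) //.
  rewrite big1 // => j _; apply: count0 => m'.
  case: (eqVneq (j : nat) (size cs).-1) => [ej | nj]; last by rewrite !andbF.
  by rewrite ej LS_pos //= rcons_leaf.
case: v wv nb => [[|b l']] wv nb.
  rewrite prec_leafr //= addn0.
  rewrite (count_split (fun l0 r j => [&& l0 == Node (a :: l), r == leaf & j == (size cs).-1])) //.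
  rewrite (bigD1 (Ordinal hk)) //= big1 ?addn0; last first.
    by move=> j hj; apply: count0 => m'; rewrite (ord_neq hj) !andbF.
  rewrite LS_pos // RSk // eqxx.
  have hm : nth leaf cs (size cs).-1 \in cs by apply: mem_nth.
  rewrite (@eq_count _ _ (fun m' => (Node (rcons (take (size cs).-1 cs) (lsplit (nth leaf cs (size cs).-1) m')) == Node (a :: l)) && (rsplit (nth leaf cs (size cs).-1) m' == leaf))); last by move=> m' /=; rewrite andbT.
  transitivity (nat_of_bool (Node (rcons (take (size cs).-1 cs) (nth leaf cs (size cs).-1)) == Node (a :: l))); last first.
    by symmetry; exact: (Rleaf (wf_child wft hm) (fun l0 => Node (rcons (take (size cs).-1 cs) l0) == Node (a :: l))).
  rewrite -take_nth // prednK; last by case: (size cs) hs.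
  by rewrite take_size eq_sym.
apply: prec_count => //; by case/andP: wu.
Qed.

Lemma succ_full cs u v : wf (Node cs) -> cs != [::] -> wf u -> wf v ->
  ~~ ((u == leaf) && (v == leaf)) ->
  count_mem (Node cs) (succ u v) =
  count (fun m => [&& lsplit (Node cs) m == u, rsplit (Node cs) m == v
                    & root_child (Node cs) m == 0]) (iota 1 (nleaves (Node cs))).
Proof.
move=> wft hcs wu wv nb.
have hs : 1 < size cs by apply: wf_size.
have IH' : forall c0, c0 \in cs -> Pstar c0.
  by move=> c0 hc0; apply: all_Pstar; exact: wf_child wft hc0.
have h0 : 0 < size cs by case: (size cs) hs.
have hk0 : 0 != (size cs).-1 by case: (size cs) hs => // [[|n]].
case: v wv nb => [[|b l']] wv nb.
  rewrite succ_leafr /=.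
  rewrite (count_split (fun l0 r j => [&& l0 == u, r == leaf & j == 0])) //.
  rewrite big1 // => j _; apply: count0 => m'.
  case: (eqVneq (j : nat) 0) => [ej | nj]; last by rewrite !andbF.
  by rewrite ej RS_nk //= cons_leaf andbF.
case: u wu nb => [[|a l]] wu nb.
  rewrite succ_leafl //= addn0.
  rewrite (count_split (fun l0 r j => [&& l0 == leaf, r == Node (b :: l') & j == 0])) //.
  rewrite (bigD1 (Ordinal h0)) //= big1 ?addn0; last first.
    by move=> j hj; apply: count0 => m'; rewrite (ord_neq hj) !andbF.
  rewrite LS0 RS_nk // eqxx.
  have hm : nth leaf cs 0 \in cs by apply: mem_nth.
  rewrite (@eq_count _ _ (fun m' => (lsplit (nth leaf cs 0) m' == leaf) && (Node (rsplit (nth leaf cs 0) m' :: drop 1 cs) == Node (b :: l')))); last by move=> m' /=; rewrite andbT.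
  transitivity (nat_of_bool (Node (nth leaf cs 0 :: drop 1 cs) == Node (b :: l'))); last first.
    by symmetry; exact: (Lleaf (wf_child wft hm) (fun r => Node (r :: drop 1 cs) == Node (b :: l'))).
  rewrite drop1 nth0 -/(first_ch cs) -(first_behead hcs).
  by rewrite eq_sym.
apply: succ_count => //; by case/andP: wv.
Qed.

Lemma dot_full cs u v : wf (Node cs) -> cs != [::] -> wf u -> wf v ->
  ~~ ((u == leaf) && (v == leaf)) ->
  count_mem (Node cs) (dotp u v) =
  count (fun m => [&& lsplit (Node cs) m == u, rsplit (Node cs) m == v
                    & 0 < root_child (Node cs) m < (size cs).-1]) (iota 1 (nleaves (Node cs))).
Proof.
move=> wft hcs wu wv nb.
have hs : 1 < size cs by apply: wf_size.
have IH' : forall c0, c0 \in cs -> Pstar c0.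
  by move=> c0 hc0; apply: all_Pstar; exact: wf_child wft hc0.
case: u wu nb => [[|a l]] wu nb.
  rewrite dot_leafl /=.
  rewrite (count_split (fun l0 r j => [&& l0 == leaf, r == v & 0 < j < (size cs).-1])) //.
  rewrite big1 // => j _; apply: count0 => m'.
  case hj: (0 < (j : nat) < (size cs).-1); last by rewrite !andbF.
  by case/andP: hj => hj _; rewrite LS_pos //= rcons_leaf.
case: v wv nb => [[|b l']] wv nb.
  rewrite dot_leafr /=.
  rewrite (count_split (fun l0 r j => [&& l0 == Node (a :: l), r == leaf & 0 < j < (size cs).-1])) //.
  rewrite big1 // => j _; apply: count0 => m'.
  case hj: (0 < (j : nat) < (size cs).-1); last by rewrite !andbF.
  case/andP: hj => _ hj; rewrite RS_nk /=; last by rewrite neq_ltn hj.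
  by rewrite cons_leaf andbF.
apply: dot_count => //.
- exact: wf_size.
- exact: wf_size.
- by case/andP: wu.
- by case/andP: wv.
Qed.

Unset Implicit Arguments.

Theorem mainTheorem10 (K : fieldType) (t : tree) :
  wf t -> t != leaf ->
  let N := nleaves t in
  let k := (size (children t)).-1 in
  (forall u v : tree, wf u -> wf v ->
     ((count_mem t (star u v))%:R : K)%R =
     (count (fun m => (lsplit t m == u) && (rsplit t m == v)) (iota 1 N))%:R%R)
  /\
  (forall u v : tree, wf u -> wf v -> ~~ ((u == leaf) && (v == leaf)) ->
     ((count_mem t (prec u v))%:R : K)%R =
     (count (fun m => [&& lsplit t m == u, rsplit t m == v & root_child t m == k])
        (iota 1 N))%:R%R)
  /\
  (forall u v : tree, wf u -> wf v -> ~~ ((u == leaf) && (v == leaf)) ->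
     ((count_mem t (succ u v))%:R : K)%R =
     (count (fun m => [&& lsplit t m == u, rsplit t m == v & root_child t m == 0%N])
        (iota 1 N))%:R%R)
  /\
  (forall u v : tree, wf u -> wf v -> ~~ ((u == leaf) && (v == leaf)) ->
     ((count_mem t (dotp u v))%:R : K)%R =
     (count (fun m => [&& lsplit t m == u, rsplit t m == v &
                          (0 < root_child t m < k)%N])
        (iota 1 N))%:R%R).
Proof.
case: t => cs wft tnl N k.
have hcs : cs != [::] by apply: contra tnl => /eqP ->.
split; [|split; [|split]] => u v wu wv; [| move=> nb ..]; congr (_ %:R)%R.
- exact: all_Pstar.
- exact: prec_full.
- exact: succ_full.
- exact: dot_full.
Qed.
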